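(* Let $\widetilde G=(\widetilde N,\widetilde E)$ be a directed graph in which every edge $(\tilde n_1,\tilde n_2)\in\widetilde E$ carries a delay $\widetilde D_{\tilde n_1,\tilde n_2}\ge 0$ and a reliability $\widetilde\eta_{\tilde n_1,\tilde n_2}\in(0,1]$. Let $D(s)>0$ be a target delay, $H(s)\in(0,1)$ a target reliability, and $\gamma$ a positive integer. Assign to each edge the weight $$\tilde w(\tilde n_1,\tilde n_2)=\Big(\tilde w_0,\tilde w_1\Big)=\left(\frac{\widetilde D_{\tilde n_1,\tilde n_2}}{D(s)},\ \frac{\log\widetilde\eta_{\tilde n_1,\tilde n_2}}{\log H(s)}\right).$$ Define the expanded graph as follows: its vertices are $\tilde n^{i,j}$ for every $\tilde n\in\widetilde N$ and all integers $0\le i,j\le\gamma$; for every edge $(\tilde n_1,\tilde n_2)\in\widetilde E$ (among those retained, e.g. those with sufficient capacity) and every $i,j$, there is an (unweighted) directed edge from $\tilde n_1^{i,j}$ to $\tilde n_2^{\,i+\lceil\gamma\tilde w_0(\tilde n_1,\tilde n_2)\rceil,\ j+\lceil\gamma \tilde w_1(\tilde n_1,\tilde n_2)\rceil}$ whenever both superscripts are at most $\gamma$ (otherwise no edge is created). Then for any path in the expanded graph starting at a vertex of the form $e^{0,0}$, the corresponding path $e=\tilde n_0,\tilde n_1,\dots,\tilde n_m$ in $\widetilde G$ satisfies $$\sum_{k=1}^{m}\widetilde D_{\tilde n_{k-1},\tilde n_k}\le D(s)\quad\text{and}\quad\prod_{k=1}^{m}\widetilde\eta_{\tilde n_{k-1},\tilde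 n_k}\ge H(s),$$ i.e. it honors the additive KPI targets (network delay and reliability).
   Context: In the paper's network-slicing setting, $\widetilde G$ is the ''decision graph'': its vertices are service endpoints and computation-capable nodes (with replicas), and an edge $(\tilde n_1,\tilde n_2)$ represents deploying a virtual network function at $\tilde n_1$ and the next one at $\tilde n_2$, connected via a virtual link whose delay is the sum of the delays and whose reliability is the product of the reliabilities of the physical links and nodes composing it. The vertex $e^{0,0}$ is the copy of an endpoint $e$ with both superscripts equal to zero. *)

(* Defs.v *)
From mathcomp Require Import all_boot all_order all_algebra.
From mathcomp Require Import all_classical all_reals all_analysis.
Set Implicit Arguments. Unset Strict Implicit. Unset Printing Implicit Defensive.
Import Order.TTheory GRing.Theory Num.Theory.
Local Open Scope ring_scope.

Section Expanded.
Variables (R : realType) (N : Type).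
Variables (E : N -> N -> Prop) (Dl eta : N -> N -> R).
Variables (Ds Hs : R) (gamma : nat).

Definition w0 (x y : N) : R := Dl x y / Ds.
Definition w1 (x y : N) : R := ln (eta x y) / ln Hs.

(* expanded vertex n^{i,j} is (n, i, j) with 0 <= i, j <= gamma *)
Definition xvertex (v : N * nat * nat) : Prop :=
  (v.1.2 <= gamma)%N /\ (v.2 <= gamma)%N.

Definition xedge (v1 v2 : N * nat * nat) : Prop :=
  let: (n1, i1, j1) := v1 in
  let: (n2, i2, j2) := v2 in
  [/\ E n1 n2, xvertex (n1, i1, j1), xvertex (n2, i2, j2),
      (i2 : int) = (i1 : int) + Num.ceil (gamma%:R * w0 n1 n2)
    & (j2 : int) = (j1 : int) + Num.ceil (gamma%:R * w1 n1 n2)].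

Fixpoint xpath (v : N * nat * nat) (s : seq (N * nat * nat)) : Prop :=
  match s with
  | [::] => True
  | w :: s' => xedge v w /\ xpath w s'
  end.
End Expanded.

Fixpoint path_delay (R : realType) (N : Type) (Dl : N -> N -> R)
    (x : N) (s : seq N) : R :=
  match s with
  | [::] => 0
  | y :: s' => Dl x y + path_delay Dl y s'
  end.

Fixpoint path_rel (R : realType) (N : Type) (eta : N -> N -> R)
    (x : N) (s : seq N) : R :=
  match s with
  | [::] => 1
  | y :: s' => eta x y * path_rel eta y s'
  end.

(* Main.v *)
Require Import Defs.
From mathcomp Require Import all_boot all_order all_algebra.
From mathcomp Require Import all_classical all_reals all_analysis.
Import Order.TTheory GRing.Theory Num.Theory.
Local Open Scope ring_scope.

Lemma gen (R : realType) (N : Type) (E : N -> N -> Prop)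
    (Dl eta : N -> N -> R) (Ds Hs : R) (gamma : nat)
    (hD : forall x y, E x y -> 0 <= Dl x y)
    (heta : forall x y, E x y -> 0 < eta x y <= 1)
    (hDs : 0 < Ds) (hHs : 0 < Hs < 1)
    (s : seq (N * nat * nat)) : forall n i j,
  (i <= gamma)%N -> (j <= gamma)%N ->
  xpath E Dl eta Ds Hs gamma (n, i, j) s ->
  i%:R + gamma%:R * (path_delay Dl n [seq v.1.1 | v <- s] / Ds) <= gamma%:R /\
  0 < path_rel eta n [seq v.1.1 | v <- s] /\
  j%:R + gamma%:R * (ln (path_rel eta n [seq v.1.1 | v <- s]) / ln Hs) <= gamma%:R.
Proof.
elim: s => [|[[m i2] j2] s IH] n i j hi hj /=.
  by rewrite mul0r mulr0 addr0 ln1 mul0r mulr0 addr0 !ler_nat hi hj ltr01.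
move=> [[hE _ [/= hi2 hj2] Hi Hj] hp].
have [H1 [H2 H3]] := IH _ _ _ hi2 hj2 hp.
have ei : (i2%:R : R) = i%:R + (Num.ceil (gamma%:R * w0 Dl Ds n m))%:~R.
  by rewrite -[LHS]/((i2:int)%:~R) Hi rmorphD.
have ej : (j2%:R : R) = j%:R + (Num.ceil (gamma%:R * w1 eta Hs n m))%:~R.
  by rewrite -[LHS]/((j2:int)%:~R) Hj rmorphD.
have c0 := ceil_ge (gamma%:R * w0 Dl Ds n m).
have c1 := ceil_ge (gamma%:R * w1 eta Hs n m).
rewrite /w0 /w1 in c0 c1.
have [he0 he1] := andP (heta _ _ hE).
split; last split.
- rewrite mulrDl mulrDr addrA; apply: le_trans H1.
  rewrite ei -!addrA lerD2l lerD2r; exact: c0.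
- exact: mulr_gt0.
- rewrite lnM ?posrE // mulrDl mulrDr addrA; apply: le_trans H3.
  rewrite ej -!addrA lerD2l lerD2r; exact: c1.
Qed.

Theorem lemma1 (R : realType) (N : Type) (E : N -> N -> Prop)
    (Dl eta : N -> N -> R) (Ds Hs : R) (gamma : nat)
    (hD : forall x y, E x y -> 0 <= Dl x y)
    (heta : forall x y, E x y -> 0 < eta x y <= 1)
    (hDs : 0 < Ds) (hHs : 0 < Hs < 1) (hgamma : (0 < gamma)%N)
    (e : N) (s : seq (N * nat * nat)) :
  xpath E Dl eta Ds Hs gamma (e, 0%N, 0%N) s ->
  path_delay Dl e [seq v.1.1 | v <- s] <= Ds /\
  Hs <= path_rel eta e [seq v.1.1 | v <- s].
Proof.
move=> hp.
have [H1 [H2 H3]] := @gen R N E Dl eta Ds Hs gamma hD heta hDs hHs s e 0%N 0%N (leq0n _) (leq0n _) hp.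
rewrite add0r in H1; rewrite add0r in H3.
have g0 : (0 : R) < gamma%:R by rewrite ltr0n.
have lH : ln Hs < 0 by apply: ln_lt0.
split.
- have h : path_delay Dl e [seq v.1.1 | v <- s] / Ds <= 1.
    by rewrite -(ler_pM2l g0) mulr1.
  by move: h; rewrite ler_pdivrMr // mul1r.
- have h : ln (path_rel eta e [seq v.1.1 | v <- s]) / ln Hs <= 1.
    by rewrite -(ler_pM2l g0) mulr1.
  move: h; rewrite ler_ndivrMr // mul1r => h.
  by rewrite -(ler_ln (x:=Hs)) ?posrE //; case/andP: hHs.
Qed.
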